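(* For all tests $b,c$, all $e,f,g,h\in\mathrm{Exp}$ and all $r,s,t,u\in S$: (DF1) $\odot t;(e\oplus_{r,s}f)\equiv e\oplus_{tr,ts}f$; (DF2) $e+_b(f+_cg)\equiv(e+_bf)+_{b+c}g$; (DF3) $e+_b\mathtt 0\equiv b;e$; (DF4) $b;(e+_bf)\equiv b;e$; (DF5) $(e+_bf)\oplus_{r,s}g\equiv(e\oplus_{r,s}g)+_b(f\oplus_{r,s}g)$; (DF6) $(e+_bf)\oplus_{r,s}(g+_bh)\equiv(e\oplus_{r,s}g)+_b(f\oplus_{r,s}h)$; (DF7) $e+_{\mathtt 1}f\equiv e$; (DF8) $b;(e+_cf)\equiv b;e+_cb;f$; (DF9) $b;(e+_cf)\equiv b;(b;e+_cf)$; (DF10) $\odot r;\odot s\equiv\odot(rs)$; (DF11) $\odot r;(e+_bf)\equiv\odot r;e+_b\odot r;f$; (DF12) $g\oplus_{r,s}\odot0\equiv\odot r;g$; (DF13) $b;(e\oplus_{r,s}f)\equiv b;(b;e\oplus_{r,s}f)$; (DF14) $g\oplus_{s,t}(e\oplus_{r,u}\odot0)\equiv g\oplus_{s,tr}e$.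
   Context: Fix a finite set $T$ of primitive tests, a set $\mathrm{Act}$ of atomic actions, a set $\mathrm{Out}$ of return values, and a semiring $(S,+,\cdot,0,1)$ that is positive, refinement and Conway (with ${}^*:S\to S$ satisfying $(a+b)^*=a^*(ba^* )^*$, $(ab)^*=1+a(ba)^*b$). Tests: $b,c\in\mathrm{BExp}::=\mathtt{0}\mid\mathtt{1}\mid t\ (t\in T)\mid\bar b\mid b+c\mid bc$ ($\mathtt 0,\mathtt 1$ false/true, distinct from semiring $0,1$); $\equiv_{BA}$ is Boolean equivalence; $\mathrm{At}$ is the finite set of atoms of the free Boolean algebra on $T$; $\alpha\le b$ means $\alpha$ entails $b$. Expressions: $e,f\in\mathrm{Exp}::= p\in\mathrm{Act}\mid b\in\mathrm{BExp}\mid e+_b f\mid e;f\mid e^{(b)}\mid v\in\mathrm{Out}\mid e\oplus_{r,s} f\ (r,s\in S)$; $\odot r:=\mathtt 1\oplus_{r,0}\mathtt 0$. $E:\mathrm{Exp}\to S^{\mathrm{At}}$: $E(p)_\alpha=E(v)_\alpha=0$; $E(b)_\alpha=1$ if $\alpha\le b$ else $0$; $E(e\oplus_{r,s}f)_\alpha=rE(e)_\alpha+sE(f)_\alpha$; $E(e+_bf)_\alpha=E(e)_\alpha$ if $\alpha\le b$ else $E(f)_\alpha$; $E(e;f)_\alpha=E(e)_\alpha E(f)_\alpha$; $E(e^{(b)})_\alpha=E(\bar b)_\alpha$. The relation $\equiv$ is the smallest congruence on $\mathrm{Exp}$ (tests taken up to $\equiv_{BA}$; sequencing binds tighter than $\oplus$,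 $\odot$ binds tightest) containing, for all $e,f,g\in\mathrm{Exp}$, tests $b,c$, $v\in\mathrm{Out}$, $r,s,t,u\in S$: (G1) $e+_be\equiv e$; (G2) $e+_bf\equiv b;e+_bf$; (G3) $e+_bf\equiv f+_{\bar b}e$; (G4) $(e+_bf)+_cg\equiv e+_{bc}(f+_cg)$; (D1) $e\oplus_{r,s}(f+_bg)\equiv(e\oplus_{r,s}f)+_b(e\oplus_{r,s}g)$; (D2) $e\oplus_{r,s}(f\oplus_{t,u}g)\equiv e\oplus_{r,1}(f\oplus_{st,su}g)$; (D3) $b;(e\oplus_{r,s}f)\equiv b;(b;e\oplus_{r,s}b;f)$; (S1) $\mathtt 1;e\equiv e\equiv e;\mathtt 1$; (S2) $(e;f);g\equiv e;(f;g)$; (S3) $\mathtt 0;e\equiv\mathtt 0$; (S4) $(e\oplus_{r,s}f);g\equiv e;g\oplus_{r,s}f;g$; (S5) $(e+_bf);g\equiv e;g+_bf;g$; (S6) $v;e\equiv v$; (S7) $b;c\equiv bc$; (L1) $e^{(b)}\equiv e;e^{(b)}+_b\mathtt 1$; (C1) $\odot1\equiv\mathtt 1$; (C2) $\odot0;e\equiv\odot0$; (W1) $e\oplus_{r,s}e\equiv\odot(r+s);e$; (W2) $e\oplus_{r,s}f\equiv f\oplus_{s,r}e$; (W3) $e\oplus_{r,s}(f\oplus_{t,u}g)\equiv(e\oplus_{r,st}f)\oplus_{1,su}g$; (W4) $e\oplus_{ru,s}f\equiv(\odot u;e)\oplus_{r,s}f$; and closed under the rules (L2) if $e\equiv(f\oplus_{r,s}\mathtt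 1)+_cg$ then $c;e^{(b)}\equiv c;((\odot(s^*r);f;e^{(b)})+_b\mathtt 1)$; (F1) if $g\equiv e;g+_bf$ and $E(e)_\alpha=0$ for all $\alpha\in\mathrm{At}$ then $g\equiv e^{(b)};f$. *)

(* Defs.v *)
From HB Require Import structures.
From mathcomp Require Import all_boot all_algebra.
Set Implicit Arguments. Unset Strict Implicit. Unset Printing Implicit Defensive.
Import GRing.Theory.
Local Open Scope ring_scope.

Section SemiringProps.
Variable S : pzSemiRingType.

Definition positive_semiring : Prop :=
  (forall a b : S, a + b = 0 -> a = 0 /\ b = 0) /\
  (forall a b : S, a * b = 0 -> a = 0 \/ b = 0).

Definition refinement_semiring : Prop :=
  forall a1 a2 b1 b2 : S, a1 + a2 = b1 + b2 ->
    exists c11 c12 c21 c22 : S,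
      [/\ a1 = c11 + c12, a2 = c21 + c22, b1 = c11 + c21 & b2 = c12 + c22].

Definition conway_star (star : S -> S) : Prop :=
  (forall a b : S, star (a + b) = star a * star (b * star a)) /\
  (forall a b : S, star (a * b) = 1 + a * star (b * a) * b).
End SemiringProps.

Inductive BExp (T : Type) : Type :=
| BFalse : BExp T
| BTrue : BExp T
| BPrim : T -> BExp T
| BNot : BExp T -> BExp T
| BOr : BExp T -> BExp T -> BExp T
| BAnd : BExp T -> BExp T -> BExp T.

Arguments BFalse {T}. Arguments BTrue {T}.

(* Atoms of the free Boolean algebra on a finite T are identified with the
   valuations T -> bool; [bsat a b] is "a <= b". *)
Definition atom (T : finType) := T -> bool.

Fixpoint bsat (T : finType) (a : atom T) (b : BExp T) : bool :=
  match b with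
  | BFalse => false
  | BTrue => true
  | BPrim t => a t
  | BNot b => ~~ bsat a b
  | BOr b c => bsat a b || bsat a c
  | BAnd b c => bsat a b && bsat a c
  end.

Definition BAeq (T : finType) (b c : BExp T) : Prop :=
  forall a : atom T, bsat a b = bsat a c.

Inductive Exp (T : finType) (Act Out : Type) (S : pzSemiRingType) : Type :=
| EAct : Act -> Exp T Act Out S
| ETest : BExp T -> Exp T Act Out S
| EGuard : Exp T Act Out S -> BExp T -> Exp T Act Out S -> Exp T Act Out S  (* e +_b f *)
| ESeq : Exp T Act Out S -> Exp T Act Out S -> Exp T Act Out S
| ELoop : Exp T Act Out S -> BExp T -> Exp T Act Out S
| EOut : Out -> Exp T Act Out S
| EChoice : Exp T Act Out S -> S -> S -> Exp T Act Out S -> Exp T Act Out S. (* e (+)_{r,s} f *)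

Section Equational.
Variables (T : finType) (Act Out : Type) (S : pzSemiRingType) (star : S -> S).
Local Notation Exp := (Exp T Act Out S).

Definition tst (b : BExp T) : Exp := ETest Act Out S b.
Definition one : Exp := tst BTrue.
Definition zero : Exp := tst BFalse.
(* ⊙r := 1 (+)_{r,0} 0 *)
Definition scal (r : S) : Exp := EChoice one r 0 zero.

Fixpoint Esem (e : Exp) (a : atom T) : S :=
  match e with
  | EAct _ => 0
  | EOut _ => 0
  | ETest b => if bsat a b then 1 else 0
  | EChoice e r s f => r * Esem e a + s * Esem f a
  | EGuard e b f => if bsat a b then Esem e a else Esem f a
  | ESeq e f => Esem e a * Esem f a
  | ELoop e b => if bsat a (BNot b) then 1 else 0
  end.

Inductive eqv : Exp -> Exp -> Prop :=
| eqv_refl e : eqv e e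
| eqv_sym e f : eqv e f -> eqv f e
| eqv_trans e f g : eqv e f -> eqv f g -> eqv e g
| eqv_test b c : BAeq b c -> eqv (tst b) (tst c)
| eqv_guard e e' b c f f' : eqv e e' -> BAeq b c -> eqv f f' ->
    eqv (EGuard e b f) (EGuard e' c f')
| eqv_seq e e' f f' : eqv e e' -> eqv f f' -> eqv (ESeq e f) (ESeq e' f')
| eqv_loop e e' b c : eqv e e' -> BAeq b c -> eqv (ELoop e b) (ELoop e' c)
| eqv_choice e e' r s f f' : eqv e e' -> eqv f f' ->
    eqv (EChoice e r s f) (EChoice e' r s f')
| ax_G1 e b : eqv (EGuard e b e) e
| ax_G2 e b f : eqv (EGuard e b f) (EGuard (ESeq (tst b) e) b f)
| ax_G3 e b f : eqv (EGuard e b f) (EGuard f (BNot b) e)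
| ax_G4 e b c f g : eqv (EGuard (EGuard e b f) c g) (EGuard e (BAnd b c) (EGuard f c g))
| ax_D1 e r s f b g :
    eqv (EChoice e r s (EGuard f b g)) (EGuard (EChoice e r s f) b (EChoice e r s g))
| ax_D2 e r s f t u g :
    eqv (EChoice e r s (EChoice f t u g)) (EChoice e r 1 (EChoice f (s * t) (s * u) g))
| ax_D3 b e r s f :
    eqv (ESeq (tst b) (EChoice e r s f))
        (ESeq (tst b) (EChoice (ESeq (tst b) e) r s (ESeq (tst b) f)))
| ax_S1l e : eqv (ESeq one e) e
| ax_S1r e : eqv e (ESeq e one)
| ax_S2 e f g : eqv (ESeq (ESeq e f) g) (ESeq e (ESeq f g))
| ax_S3 e : eqv (ESeq zero e) zero
| ax_S4 e r s f g : eqv (ESeq (EChoice e r s f) g) (EChoice (ESeq e g) r s (ESeq f g))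
| ax_S5 e b f g : eqv (ESeq (EGuard e b f) g) (EGuard (ESeq e g) b (ESeq f g))
| ax_S6 v e : eqv (ESeq (EOut T Act S v) e) (EOut T Act S v)
| ax_S7 b c : eqv (ESeq (tst b) (tst c)) (tst (BAnd b c))
| ax_L1 e b : eqv (ELoop e b) (EGuard (ESeq e (ELoop e b)) b one)
| ax_C1 : eqv (scal 1) one
| ax_C2 e : eqv (ESeq (scal 0) e) (scal 0)
| ax_W1 e r s : eqv (EChoice e r s e) (ESeq (scal (r + s)) e)
| ax_W2 e r s f : eqv (EChoice e r s f) (EChoice f s r e)
| ax_W3 e r s f t u g :
    eqv (EChoice e r s (EChoice f t u g)) (EChoice (EChoice e r (s * t) f) 1 (s * u) g)
| ax_W4 e r u s f : eqv (EChoice e (r * u) s f) (EChoice (ESeq (scal u) e) r s f)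
| rule_L2 e f r s c g b :
    eqv e (EGuard (EChoice f r s one) c g) ->
    eqv (ESeq (tst c) (ELoop e b))
        (ESeq (tst c) (EGuard (ESeq (scal (star s * r)) (ESeq f (ELoop e b))) b one))
| rule_F1 g e b f :
    eqv g (EGuard (ESeq e g) b f) -> (forall a : atom T, Esem e a = 0) ->
    eqv g (ESeq (ELoop e b) f).
End Equational.

(* Main.v *)
Require Import Defs.
From mathcomp Require Import all_boot all_algebra.
Local Open Scope ring_scope.
Import GRing.Theory.

Section H.
Variables (T : finType) (Act Out : Type) (S : pzSemiRingType) (star : S -> S).
Local Notation X := (Exp T Act Out S).
Local Notation "x ~~ y" := (@eqv T Act Out S star x y) (at level 70).
Local Notation t := (@tst T Act Out S).
Local Notation z := (@Defs.zero T Act Out S).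
Local Notation o := (@Defs.one T Act Out S).
Local Notation sc := (@scal T Act Out S).

Tactic Notation "tr" constr(y) := apply (@eqv_trans T Act Out S star _ y).
Ltac bat := let a := fresh "a" in move=> a /=; repeat match goal with |- context[bsat ?a ?x] => case: (bsat a x) end; done.
Ltac sy := apply eqv_sym.
Ltac rf := apply eqv_refl.

Lemma gl (e e' : X) b f : e ~~ e' -> EGuard e b f ~~ EGuard e' b f.
Proof. move=> H; apply eqv_guard => //; rf. Qed.
Lemma gr (e : X) b f f' : f ~~ f' -> EGuard e b f ~~ EGuard e b f'.
Proof. move=> H; apply eqv_guard => //; rf. Qed.
Lemma gb (e : X) b c f : BAeq b c -> EGuard e b f ~~ EGuard e c f.
Proof. move=> H; apply eqv_guard => //; rf. Qed.
Lemma sl (e e' f : X) : e ~~ e' -> ESeq e f ~~ ESeq e' f.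
Proof. move=> H; apply eqv_seq => //; rf. Qed.
Lemma sr (e f f' : X) : f ~~ f' -> ESeq e f ~~ ESeq e f'.
Proof. move=> H; apply eqv_seq => //; rf. Qed.
Lemma cl (e e' f : X) r s : e ~~ e' -> EChoice e r s f ~~ EChoice e' r s f.
Proof. move=> H; apply eqv_choice => //; rf. Qed.
Lemma cr (e f f' : X) r s : f ~~ f' -> EChoice e r s f ~~ EChoice e r s f'.
Proof. move=> H; apply eqv_choice => //; rf. Qed.

Lemma tt (b c : BExp T) (e : X) : ESeq (t b) (ESeq (t c) e) ~~ ESeq (t (BAnd b c)) e.
Proof. sy; tr (ESeq (ESeq (t b) (t c)) e); [apply sl; sy; apply ax_S7|apply ax_S2]. Qed.

Lemma tz (b : BExp T) (e : X) : BAeq b BFalse -> ESeq (t b) e ~~ z.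
Proof. move=> H; tr (ESeq z e); [apply sl; by apply eqv_test|apply ax_S3]. Qed.

Lemma tz0 (b : BExp T) : ESeq (t b) z ~~ z.
Proof. tr (t (BAnd b BFalse)); first apply ax_S7. apply eqv_test; bat. Qed.

Lemma R2 (e f : X) b : EGuard e b f ~~ EGuard e b (ESeq (t (BNot b)) f).
Proof.
tr (EGuard f (BNot b) e); first apply ax_G3.
tr (EGuard (ESeq (t (BNot b)) f) (BNot b) e); first apply ax_G2.
tr (EGuard e (BNot (BNot b)) (ESeq (t (BNot b)) f)); first apply ax_G3.
apply gb ; bat.
Qed.

Lemma GR (e f f' : X) b : ESeq (t (BNot b)) f ~~ ESeq (t (BNot b)) f' ->
  EGuard e b f ~~ EGuard e b f'.
Proof. move=> H; tr (EGuard e b (ESeq (t (BNot b)) f)); first apply R2.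
tr (EGuard e b (ESeq (t (BNot b)) f')); first by apply gr. sy; apply R2. Qed.

Lemma DF3 (e : X) b : EGuard e b z ~~ ESeq (t b) e.
Proof.
tr (EGuard (ESeq (t b) e) b z); first apply ax_G2.
sy; tr (EGuard (ESeq (t b) e) b (ESeq (t b) e)); first (sy; apply ax_G1).
apply GR. tr z; last (sy; apply tz0).
tr (ESeq (t (BAnd (BNot b) b)) e); first apply tt. apply tz ; bat.
Qed.

Lemma DF7 (e f : X) : EGuard e BTrue f ~~ e.
Proof.
tr (EGuard e BTrue z). apply GR. tr z; last (sy; apply tz ; bat).
apply tz ; bat.
tr (ESeq o e); [apply DF3|apply ax_S1l].
Qed.

Lemma TG (e f : X) b c c' : BAeq (BAnd c b) (BAnd c' b) ->
  ESeq (t b) (EGuard e c f) ~~ ESeq (t b) (EGuard e c' f).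
Proof. move=> H.
tr (EGuard (EGuard e c f) b z); first (sy; apply DF3).
tr (EGuard e (BAnd c b) (EGuard f b z)); first apply ax_G4.
tr (EGuard e (BAnd c' b) (EGuard f b z)); first by apply gb.
tr (EGuard (EGuard e c' f) b z); first (sy; apply ax_G4).
apply DF3.
Qed.

Lemma DF4 (e f : X) b : ESeq (t b) (EGuard e b f) ~~ ESeq (t b) e.
Proof.
tr (EGuard (EGuard e b f) b z); first (sy; apply DF3).
tr (EGuard e (BAnd b b) (EGuard f b z)); first apply ax_G4.
tr (EGuard e b (EGuard f b z)); first (apply gb ; bat).
tr (EGuard e b z); last apply DF3.
apply GR. tr (ESeq (t (BNot b)) (ESeq (t b) f)); first (apply sr; apply DF3).
tr (ESeq (t (BAnd (BNot b) b)) f); first apply tt.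
tr z; first (apply tz ; bat).
sy; apply tz0.
Qed.

Lemma DF4n (e f : X) b : ESeq (t (BNot b)) (EGuard e b f) ~~ ESeq (t (BNot b)) f.
Proof. tr (ESeq (t (BNot b)) (EGuard f (BNot b) e)); [apply sr; apply ax_G3|apply DF4]. Qed.

Lemma DF2 (e f g : X) b c : EGuard e b (EGuard f c g) ~~ EGuard (EGuard e b f) (BOr b c) g.
Proof.
sy; tr (EGuard e (BAnd b (BOr b c)) (EGuard f (BOr b c) g)); first apply ax_G4.
tr (EGuard e b (EGuard f (BOr b c) g)); first (apply gb ; bat).
apply GR; apply TG ; bat.
Qed.

Lemma DF8 (e f : X) b c : ESeq (t b) (EGuard e c f) ~~ EGuard (ESeq (t b) e) c (ESeq (t b) f).
Proof.
tr (EGuard (EGuard e c f) b z); first (sy; apply DF3).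
tr (EGuard e (BAnd c b) (EGuard f b z)); first apply ax_G4.
sy; tr (EGuard (EGuard e b z) c (EGuard f b z)); first (apply eqv_guard => //; sy; apply DF3).
tr (EGuard e (BAnd b c) (EGuard z c (EGuard f b z))); first apply ax_G4.
tr (EGuard e (BAnd c b) (EGuard z c (EGuard f b z))); first (apply gb ; bat).
apply GR.
tr (ESeq (t (BNot (BAnd c b))) (ESeq (t (BNot c)) (EGuard f b z))).
  apply sr. tr (EGuard (EGuard f b z) (BNot c) z); first apply ax_G3. apply DF3.
tr (ESeq (t (BAnd (BNot (BAnd c b)) (BNot c))) (EGuard f b z)); first apply tt.
tr (ESeq (t (BAnd (BNot (BAnd c b)) (BNot c))) (ESeq (t b) f)); first (apply sr; apply DF3).
tr (ESeq (t (BAnd (BAnd (BNot (BAnd c b)) (BNot c)) b)) f); first apply tt.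
sy. tr (ESeq (t (BNot (BAnd c b))) (ESeq (t b) f)); first (apply sr; apply DF3).
tr (ESeq (t (BAnd (BNot (BAnd c b)) b)) f); first apply tt.
apply sl; apply eqv_test => a /=. by case: (bsat a b); case: (bsat a c).
Qed.

Lemma DF9 (e f : X) b c : ESeq (t b) (EGuard e c f) ~~ ESeq (t b) (EGuard (ESeq (t b) e) c f).
Proof.
tr (EGuard (ESeq (t b) e) c (ESeq (t b) f)); first apply DF8.
sy; tr (EGuard (ESeq (t b) (ESeq (t b) e)) c (ESeq (t b) f)); first apply DF8.
apply gl. tr (ESeq (t (BAnd b b)) e); first apply tt.
apply sl; apply eqv_test ; bat.
Qed.

Lemma SZ (e : X) r : ESeq (sc r) e ~~ EChoice e r 0 z.
Proof.
tr (EChoice (ESeq o e) r 0 (ESeq z e)); first apply ax_S4.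
apply eqv_choice; [apply ax_S1l|apply ax_S3].
Qed.

Lemma SC (e : X) r : ESeq (sc r) e ~~ EChoice z 0 r e.
Proof. tr (EChoice e r 0 z); [apply SZ|apply ax_W2]. Qed.

Lemma one_l (e : X) : EChoice z 0 1 e ~~ e.
Proof. sy; tr (ESeq (sc 1) e); last apply SC.
tr (ESeq o e); first (sy; apply ax_S1l). apply sl; sy; apply ax_C1. Qed.

Lemma DF1 (e f : X) r s u : ESeq (sc u) (EChoice e r s f) ~~ EChoice e (u * r) (u * s) f.
Proof.
tr (EChoice z 0 u (EChoice e r s f)); first apply SC.
tr (EChoice z 0 1 (EChoice e (u * r) (u * s) f)); first apply ax_D2.
apply one_l.
Qed.

Lemma DF10 r s : ESeq (sc r) (sc s) ~~ sc (r * s).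
Proof. rewrite /scal. tr (EChoice o (r * s) (r * 0) z); first apply DF1. by rewrite mulr0; rf. Qed.

Lemma DF11 (e f : X) b r : ESeq (sc r) (EGuard e b f) ~~ EGuard (ESeq (sc r) e) b (ESeq (sc r) f).
Proof.
tr (EChoice z 0 r (EGuard e b f)); first apply SC.
tr (EGuard (EChoice z 0 r e) b (EChoice z 0 r f)); first apply ax_D1.
apply eqv_guard => //; sy; apply SC.
Qed.

Lemma DF5 (e f g : X) b r s : EChoice (EGuard e b f) r s g ~~ EGuard (EChoice e r s g) b (EChoice f r s g).
Proof.
tr (EChoice g s r (EGuard e b f)); first apply ax_W2.
tr (EGuard (EChoice g s r e) b (EChoice g s r f)); first apply ax_D1.
apply eqv_guard => //; apply ax_W2.
Qed.

Lemma DF6 (e f g h : X) b r s : EChoice (EGuard e b f) r s (EGuard g b h) ~~ EGuard (EChoice e r s g) b (EChoice f r s h).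
Proof.
tr (EGuard (EChoice e r s (EGuard g b h)) b (EChoice f r s (EGuard g b h))); first apply DF5.
tr (EGuard (EGuard (EChoice e r s g) b (EChoice e r s h)) b (EGuard (EChoice f r s g) b (EChoice f r s h))).
  apply eqv_guard => //; apply ax_D1.
tr (EGuard (EChoice e r s g) (BAnd b b) (EGuard (EChoice e r s h) b (EGuard (EChoice f r s g) b (EChoice f r s h)))); first apply ax_G4.
tr (EGuard (EChoice e r s g) b (EGuard (EChoice e r s h) b (EGuard (EChoice f r s g) b (EChoice f r s h)))); first (apply gb ; bat).
apply GR.
tr (ESeq (t (BNot b)) (EGuard (EChoice f r s g) b (EChoice f r s h))); first apply DF4n.
apply DF4n.
Qed.

Lemma DF12 (g : X) r s : EChoice g r s (sc 0) ~~ ESeq (sc r) g.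
Proof.
tr (EChoice (sc 0) s r g); first apply ax_W2.
tr (EChoice z 0 r g); last (sy; apply SC).
have H := ax_W4 star z s 0 r g. rewrite mulr0 in H.
sy; tr (EChoice (ESeq (sc 0) z) s r g); first exact H.
apply cl; apply ax_C2.
Qed.

Lemma DF13 (e f : X) b r s : ESeq (t b) (EChoice e r s f) ~~ ESeq (t b) (EChoice (ESeq (t b) e) r s f).
Proof.
tr (ESeq (t b) (EChoice (ESeq (t b) e) r s (ESeq (t b) f))); first apply ax_D3.
sy; tr (ESeq (t b) (EChoice (ESeq (t b) (ESeq (t b) e)) r s (ESeq (t b) f))); first apply ax_D3.
apply sr; apply cl. tr (ESeq (t (BAnd b b)) e); first apply tt.
apply sl; apply eqv_test ; bat.
Qed.

Lemma DF14 (e g : X) r s u v : EChoice g s u (EChoice e r v (sc 0)) ~~ EChoice g s (u * r) e.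
Proof.
tr (EChoice g s u (ESeq (sc r) e)); first (apply cr; apply DF12).
tr (EChoice (ESeq (sc r) e) u s g); first apply ax_W2.
tr (EChoice e (u * r) s g); first (sy; apply ax_W4).
apply ax_W2.
Qed.
End H.

Theorem mainTheorem6 (T : finType) (Act Out : Type) (S : pzSemiRingType)
  (star : S -> S)
  (Spos : positive_semiring S) (Sref : refinement_semiring S)
  (Sconway : conway_star star) :
  let eqv := @eqv T Act Out S star in
  let tst := @tst T Act Out S in
  let scal := @scal T Act Out S in
  let zero := @zero T Act Out S in
  forall (b c : BExp T) (e f g h : Exp T Act Out S) (r s t u : S),
  (* DF1 *) eqv (ESeq (scal t) (EChoice e r s f)) (EChoice e (t * r) (t * s) f) /\
  (* DF2 *) eqv (EGuard e b (EGuard f c g)) (EGuard (EGuard e b f) (BOr b c) g) /\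
  (* DF3 *) eqv (EGuard e b zero) (ESeq (tst b) e) /\
  (* DF4 *) eqv (ESeq (tst b) (EGuard e b f)) (ESeq (tst b) e) /\
  (* DF5 *) eqv (EChoice (EGuard e b f) r s g)
                (EGuard (EChoice e r s g) b (EChoice f r s g)) /\
  (* DF6 *) eqv (EChoice (EGuard e b f) r s (EGuard g b h))
                (EGuard (EChoice e r s g) b (EChoice f r s h)) /\
  (* DF7 *) eqv (EGuard e BTrue f) e /\
  (* DF8 *) eqv (ESeq (tst b) (EGuard e c f))
                (EGuard (ESeq (tst b) e) c (ESeq (tst b) f)) /\
  (* DF9 *) eqv (ESeq (tst b) (EGuard e c f))
                (ESeq (tst b) (EGuard (ESeq (tst b) e) c f)) /\
  (* DF10 *) eqv (ESeq (scal r) (scal s)) (scal (r * s)) /\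
  (* DF11 *) eqv (ESeq (scal r) (EGuard e b f))
                 (EGuard (ESeq (scal r) e) b (ESeq (scal r) f)) /\
  (* DF12 *) eqv (EChoice g r s (scal 0)) (ESeq (scal r) g) /\
  (* DF13 *) eqv (ESeq (tst b) (EChoice e r s f))
                 (ESeq (tst b) (EChoice (ESeq (tst b) e) r s f)) /\
  (* DF14 *) eqv (EChoice g s t (EChoice e r u (scal 0))) (EChoice g s (t * r) e).
Proof.
move=> eqv0 tst0 scal0 zero0 b c e f g h r s t u.
rewrite /eqv0 /tst0 /scal0 /zero0.
split; first exact: DF1.
split; first exact: DF2.
split; first exact: DF3.
split; first exact: DF4.
split; first exact: DF5.
split; first exact: DF6.
split; first exact: DF7.
split; first exact: DF8.
split; first exact: DF9.
split; first exact: DF10.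
split; first exact: DF11.
split; first exact: DF12.
split; first exact: DF13.
exact: DF14.
Qed.
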